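(* There are absolute constants $c_1,c_2>0$ such that for every $n\ge2$, every $0<\rho\le1/3$ and every $0<s\le c_1/\log(1/\rho)$, there exists an $n$-agent symmetric averaging system with parameter $\rho$ whose $s$-energy satisfies $\mathcal{E}(s)\ge\bigl(c_2/(\rho s)\bigr)^{n-1}$.
   Context: A (symmetric) averaging system with parameter $\rho\in(0,1/2]$ on $n$ agents consists of an infinite sequence of undirected graphs $(g_t)_{t\ge1}$ on $\{1,\dots,n\}$, each with a self-loop at every vertex, together with positions $x_i(t)\in[0,1]$ obeying: for each $t$ and vertex $i$, with $L_i(t)=\min\{x_j(t): \{i,j\}\in g_t\}$, $R_i(t)=\max\{x_j(t): \{i,j\}\in g_t\}$ and $\delta_i(t)=\rho(R_i(t)-L_i(t))$, the new position satisfies $L_i(t)+\delta_i(t)\le x_i(t+1)\le R_i(t)-\delta_i(t)$. Its $s$-energy is $\sum_{t\ge1}\ell_t$, where $\ell_t=\sum_m\mu_m^s$ over the lengths $\mu_m$ of the maximal intervals of the union of the segments between $x_i(t)$ and $x_j(t)$ over edges $\{i,j\}\in g_t$ (with $0^s=0$). Logarithms are base 2. *)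

(* Defs.v *)
From Stdlib Require Import Reals Lra Lia List.
Import ListNotations.
Open Scope R_scope.

(* Agents are the naturals 0..n-1.  Time steps t = 1, 2, 3, ...
   g t i j : bool  is the adjacency of the graph g_t;
   x t i   : R     is the position x_i(t). *)

Definition log2 (y : R) : R := ln y / ln 2.

(* mu^s with the convention 0^s = 0 (lengths are >= 0) *)
Definition pw (mu s : R) : R := if Rle_dec mu 0 then 0 else Rpower mu s.

Definition nbrs (n : nat) (g : nat -> nat -> nat -> bool) (t i : nat) : list nat :=
  filter (fun j => g t i j) (seq 0 n).

Definition Lpos (n : nat) (g : nat -> nat -> nat -> bool) (x : nat -> nat -> R)
  (t i : nat) : R :=
  fold_right Rmin (x t i) (map (x t) (nbrs n g t i)).
Definition Rpos (n : nat) (g : nat -> nat -> nat -> bool) (x : nat -> nat -> R)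
  (t i : nat) : R :=
  fold_right Rmax (x t i) (map (x t) (nbrs n g t i)).

Definition averaging_system (n : nat) (rho : R)
  (g : nat -> nat -> nat -> bool) (x : nat -> nat -> R) : Prop :=
  0 < rho <= 1/2 /\
  (forall t i, (1 <= t)%nat -> (i < n)%nat -> g t i i = true) /\
  (forall t i j, (1 <= t)%nat -> (i < n)%nat -> (j < n)%nat -> g t i j = g t j i) /\
  (forall t i, (1 <= t)%nat -> (i < n)%nat -> 0 <= x t i <= 1) /\
  (forall t i, (1 <= t)%nat -> (i < n)%nat ->
     let L := Lpos n g x t i in
     let Rr := Rpos n g x t i in
     let d := rho * (Rr - L) in
     L + d <= x (S t) i <= Rr - d).

Definition in_edge_union (n : nat) (g : nat -> nat -> nat -> bool)
  (x : nat -> nat -> R) (t : nat) (y : R) : Prop :=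
  exists i j, (i < n)%nat /\ (j < n)%nat /\ g t i j = true /\
    Rmin (x t i) (x t j) <= y <= Rmax (x t i) (x t j).

(* a list of closed intervals [a,b], with a <= b, sorted and pairwise separated
   by gaps (b_k < a_{k+1}); such a list describes a union of closed intervals
   via its maximal intervals (connected components). *)
Fixpoint separated_intervals (l : list (R * R)) : Prop :=
  match l with
  | [] => True
  | (a, b) :: l' =>
      a <= b /\
      match l' with
      | [] => True
      | (a', _) :: _ => b < a'
      end /\ separated_intervals l'
  end.

(* l_t = sum over maximal intervals of the edge union of (length)^s.
   ell_value n g x s t v  means  l_t = v. *)
Definition ell_value (n : nat) (g : nat -> nat -> nat -> bool)
  (x : nat -> nat -> R) (s : R) (t : nat) (v : R) : Prop :=
  exists comps : list (R * R),
    separated_intervals comps /\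
    (forall y, in_edge_union n g x t y <->
               exists ab, In ab comps /\ fst ab <= y <= snd ab) /\
    v = fold_right Rplus 0 (map (fun ab => pw (snd ab - fst ab) s) comps).

(* sum_{t>=1} l_t >= B  (as a series of nonnegative terms, possibly divergent):
   the supremum of the partial sums is at least B *)
Definition energy_ge (l : nat -> R) (B : R) : Prop :=
  forall L, L < B -> exists T : nat, L < fold_right Rplus 0 (map l (seq 1 T)).

(* Main.v *)
Require Import Defs.
From Stdlib Require Import Reals Lra Lia List ZArith FunctionalExtensionality ClassicalEpsilon.
Import ListNotations.
Open Scope R_scope.

Definition inU (comps : list (R*R)) (y : R) : Prop :=
  exists ab, In ab comps /\ fst ab <= y <= snd ab.

Lemma sep_lb : forall l a b, separated_intervals ((a,b)::l) ->
  forall ab, In ab l -> b < fst ab.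
Proof.
  induction l as [|[a' b'] l IH]; intros a b H ab Hin; [destruct Hin|].
  simpl in H. destruct H as [Hab [Hbb Hs]].
  destruct Hin as [<-|Hin]; simpl; [lra|].
  assert (H2 := IH a' b' Hs ab Hin). destruct Hs as [Ha' _]. lra.
Qed.

Lemma sep_tail : forall a l, separated_intervals (a::l) -> separated_intervals l.
Proof. intros [a b] l H. simpl in H. tauto. Qed.

Lemma insert_ex : forall comps, separated_intervals comps -> forall a b, a <= b ->
  exists comps', separated_intervals comps' /\
   (forall y, inU comps' y <-> (inU comps y \/ (a <= y <= b))) /\
   (forall m, m < a -> (forall ab, In ab comps -> m < fst ab) ->
      forall ab, In ab comps' -> m < fst ab).
Proof.
  induction comps as [|[c d] rest IH]; intros Hs a b Hab.
  - exists [(a,b)]. split; [simpl; tauto|]. split.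
    + intro y; unfold inU; split.
      * intros [ab [[<-|[]] H]]. right; exact H.
      * intros [[ab [[] _]]|H]. exists (a,b); simpl; tauto.
    + intros m Hm _ ab [<-|[]]; simpl; lra.
  - assert (Hsr := sep_tail _ _ Hs).
    assert (Hlb := sep_lb rest c d Hs).
    assert (Hcd : c <= d) by (simpl in Hs; tauto).
    destruct (Rlt_dec b c) as [Hbc|Hbc].
    + exists ((a,b)::(c,d)::rest). split; [simpl; simpl in Hs; tauto|]. split.
      * intro y; unfold inU; split.
        -- intros [ab [[<-|Hin] H]]; [right; exact H|left; exists ab; tauto].
        -- intros [[ab [Hin H]]|H]; [exists ab; simpl; tauto| exists (a,b); simpl; tauto].
      * intros m Hm Hall ab [<-|Hin]; [simpl; lra| apply Hall; exact Hin].
    + destruct (Rlt_dec d a) as [Hda|Hda].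
      * destruct (IH Hsr a b Hab) as [r' [Hs' [Hu' Hl']]].
        exists ((c,d)::r'). split.
        -- simpl. split; [exact Hcd|]. split; [|exact Hs'].
           destruct r' as [|[a' b'] r'']; [exact I|].
           apply (Hl' d Hda Hlb (a',b')); simpl; tauto.
        -- split.
           ++ intro y; split.
              ** intros [ab [[<-|Hin] H]].
                 --- left; exists (c,d); simpl; tauto.
                 --- assert (inU r' y) by (exists ab; tauto).
                     apply Hu' in H0. destruct H0 as [[ab' [Hi H']]|H0]; [left; exists ab'; simpl; tauto|right; exact H0].
              ** intros [[ab [[<-|Hin] H]]|H].
                 --- exists (c,d); simpl; tauto.
                 --- assert (inU r' y) by (apply Hu'; left; exists ab; tauto).
                     destruct H0 as [ab' [Hi H']]; exists ab'; simpl; tauto.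
                 --- assert (inU r' y) by (apply Hu'; right; exact H).
                     destruct H0 as [ab' [Hi H']]; exists ab'; simpl; tauto.
           ++ intros m Hm Hall ab [<-|Hin].
              ** apply (Hall (c,d)); simpl; tauto.
              ** apply (Hl' m Hm); [|exact Hin]. intros ab' Hi; apply Hall; simpl; tauto.
      * destruct (IH Hsr (Rmin a c) (Rmax b d)) as [r' [Hs' [Hu' Hl']]].
        { unfold Rmin, Rmax; destruct (Rle_dec a c); destruct (Rle_dec b d); lra. }
        exists r'. split; [exact Hs'|]. split.
        -- intro y. rewrite Hu'. split.
           ++ intros [[ab [Hi H]]|H].
              ** left; exists ab; simpl; tauto.
              ** destruct (Rle_dec a y); destruct (Rle_dec y b); try (right; lra);
                 (left; exists (c,d); simpl; split; [tauto|];
                 unfold Rmin, Rmax in H; destruct (Rle_dec a c); destruct (Rle_dec b d); lra).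
           ++ intros [[ab [[<-|Hi] H]]|H].
              ** right. simpl in H. unfold Rmin, Rmax; destruct (Rle_dec a c); destruct (Rle_dec b d); lra.
              ** left; exists ab; tauto.
              ** right. unfold Rmin, Rmax; destruct (Rle_dec a c); destruct (Rle_dec b d); lra.
        -- intros m Hm Hall. apply Hl'.
           ++ assert (m < c) by (apply (Hall (c,d)); simpl; tauto).
              unfold Rmin; destruct (Rle_dec a c); lra.
           ++ intros ab Hi; apply Hall; simpl; tauto.
Qed.

Lemma decomp_ex : forall ints : list (R*R), (forall ab, In ab ints -> fst ab <= snd ab) ->
  exists comps, separated_intervals comps /\
    (forall y, inU comps y <-> inU ints y).
Proof.
  induction ints as [|[a b] ints IH]; intros H.
  - exists []. split; [exact I|]. intro y; split; intros [ab [[] _]].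
  - destruct IH as [c [Hs Hu]]. { intros ab Hi; apply H; simpl; tauto. }
    assert (Hab : a <= b) by (apply (H (a,b)); simpl; tauto).
    destruct (insert_ex c Hs a b Hab) as [c' [Hs' [Hu' _]]].
    exists c'. split; [exact Hs'|]. intro y. rewrite Hu', Hu. split.
    + intros [[ab [Hi H1]]|H1]; [exists ab; simpl; tauto| exists (a,b); simpl; tauto].
    + intros [ab [[<-|Hi] H1]]; [right; exact H1| left; exists ab; tauto].
Qed.

Definition edge_ints (n : nat) (g : nat -> nat -> nat -> bool) (x : nat -> nat -> R) (t : nat)
  : list (R*R) :=
  flat_map (fun i => flat_map (fun j => if g t i j then [(Rmin (x t i) (x t j), Rmax (x t i) (x t j))] else [])
    (seq 0 n)) (seq 0 n).

Lemma edge_ints_spec : forall n g x t ab, In ab (edge_ints n g x t) <->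
  exists i j, (i < n)%nat /\ (j < n)%nat /\ g t i j = true /\ ab = (Rmin (x t i) (x t j), Rmax (x t i) (x t j)).
Proof.
  intros n g x t ab. unfold edge_ints. rewrite in_flat_map. split.
  - intros [i [Hi H]]. rewrite in_flat_map in H. destruct H as [j [Hj H]].
    apply in_seq in Hi; apply in_seq in Hj.
    destruct (g t i j) eqn:E; [|destruct H]. destruct H as [<-|[]].
    exists i, j; repeat split; try lia; auto.
  - intros [i [j [Hi [Hj [E ->]]]]]. exists i; split; [apply in_seq; lia|].
    rewrite in_flat_map. exists j; split; [apply in_seq; lia|]. rewrite E; simpl; tauto.
Qed.

Lemma pw_nonneg : forall mu s, 0 <= pw mu s.
Proof. intros; unfold pw; destruct (Rle_dec mu 0); [lra|]. unfold Rpower; left; apply exp_pos. Qed.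

Lemma sum_nonneg : forall (l : list (R*R)) s,
  0 <= fold_right Rplus 0 (map (fun ab => pw (snd ab - fst ab) s) l).
Proof. induction l; intros; simpl; [lra|]. pose proof (pw_nonneg (snd a - fst a) s). specialize (IHl s). lra. Qed.

Lemma ell_ex : forall n g x s t, exists v, ell_value n g x s t v.
Proof.
  intros. destruct (decomp_ex (edge_ints n g x t)) as [c [Hs Hu]].
  { intros ab Hab. apply edge_ints_spec in Hab. destruct Hab as [i [j [_ [_ [_ ->]]]]].
    simpl. unfold Rmin, Rmax; destruct (Rle_dec (x t i) (x t j)); lra. }
  exists (fold_right Rplus 0 (map (fun ab => pw (snd ab - fst ab) s) c)).
  exists c. split; [exact Hs|]. split; [|reflexivity].
  intro y. split.
  - intros [i [j [Hi [Hj [E H]]]]]. apply Hu. exists (Rmin (x t i) (x t j), Rmax (x t i) (x t j)).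
    split; [apply edge_ints_spec; exists i, j; tauto| exact H].
  - intro H. apply Hu in H. destruct H as [ab [Hin H]]. apply edge_ints_spec in Hin.
    destruct Hin as [i [j [Hi [Hj [E ->]]]]]. exists i, j; tauto.
Qed.

Lemma one_comp : forall comps, separated_intervals comps -> forall y1 y2, y1 <= y2 ->
  (forall y, y1 <= y <= y2 -> inU comps y) ->
  exists ab, In ab comps /\ fst ab <= y1 /\ y2 <= snd ab.
Proof.
  induction comps as [|[a b] rest IH]; intros Hs y1 y2 Hy H.
  - destruct (H y1) as [ab [[] _]]; lra.
  - assert (Hsr := sep_tail _ _ Hs). assert (Hlb := sep_lb rest a b Hs).
    assert (Hab : a <= b) by (simpl in Hs; tauto).
    destruct (H y1 (conj (Rle_refl _) Hy)) as [ab [[<-|Hin] H1]].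
    + simpl in H1. destruct (Rle_dec y2 b).
      * exists (a,b); simpl; split; [tauto|lra].
      * exfalso. destruct rest as [|[a' b'] r''].
        -- destruct (H y2) as [ab [[<-|[]] H2]]; [lra|]; simpl in H2; lra.
        -- assert (Hba' : b < a') by (apply (Hlb (a',b')); simpl; tauto).
           set (z := (b + Rmin a' y2)/2).
           assert (Hz1 : b < z). { unfold z, Rmin; destruct (Rle_dec a' y2); lra. }
           assert (Hz2 : z < a'). { unfold z, Rmin; destruct (Rle_dec a' y2); lra. }
           assert (Hz3 : z <= y2). { unfold z, Rmin; destruct (Rle_dec a' y2); lra. }
           destruct (H z) as [ab [Hin H2]]; [lra|].
           destruct Hin as [Hin|Hin]; [subst ab; simpl in H2; lra|].
           destruct Hin as [Hin|Hin]; [subst ab; simpl in H2; lra|].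
           assert (fst ab > b') by (apply (sep_lb r'' a' b' Hsr ab Hin)).
           assert (a' <= b') by (simpl in Hsr; tauto). lra.
    + assert (b < fst ab) by (apply Hlb; exact Hin).
      destruct (IH Hsr y1 y2 Hy) as [ab' [Hi' H']].
      * intros y Hy2. destruct (H y Hy2) as [ab2 [[<-|Hi2] H2]].
        -- simpl in H2; lra.
        -- exists ab2; tauto.
      * exists ab'; simpl; tauto.
Qed.

Lemma sum_ge_elem : forall (l : list (R*R)) s ab, In ab l ->
  pw (snd ab - fst ab) s <= fold_right Rplus 0 (map (fun ab => pw (snd ab - fst ab) s) l).
Proof.
  induction l as [|a l IH]; intros s ab Hin; [destruct Hin|]. simpl.
  destruct Hin as [->|Hin].
  - pose proof (sum_nonneg l s). lra.
  - pose proof (IH s ab Hin). pose proof (pw_nonneg (snd a - fst a) s). lra.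
Qed.

Lemma pw_mono : forall u v s, 0 < s -> u <= v -> pw u s <= pw v s.
Proof.
  intros u v s Hs Huv. unfold pw. destruct (Rle_dec u 0); destruct (Rle_dec v 0).
  - lra.
  - unfold Rpower; left; apply exp_pos.
  - lra.
  - apply Rle_Rpower_l; lra.
Qed.

Lemma ell_lb : forall n g x s t v i j, 0 < s -> ell_value n g x s t v ->
  (i < n)%nat -> (j < n)%nat -> g t i j = true -> pw (Rabs (x t i - x t j)) s <= v.
Proof.
  intros n g x s t v i j Hs [c [Hsep [Hu ->]]] Hi Hj E.
  set (y1 := Rmin (x t i) (x t j)). set (y2 := Rmax (x t i) (x t j)).
  destruct (one_comp c Hsep y1 y2) as [ab [Hin [H1 H2]]].
  - unfold y1, y2, Rmin, Rmax; destruct (Rle_dec (x t i) (x t j)); lra.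
  - intros y Hy. apply Hu. exists i, j; tauto.
  - eapply Rle_trans; [|apply (sum_ge_elem c s ab Hin)]. apply pw_mono; [exact Hs|].
    unfold y1, y2, Rmin, Rmax in *; destruct (Rle_dec (x t i) (x t j)); unfold Rabs;
    destruct (Rcase_abs (x t i - x t j)); lra.
Qed.

Lemma ell_nonneg : forall n g x s t v, ell_value n g x s t v -> 0 <= v.
Proof. intros n g x s t v [c [_ [_ ->]]]. apply sum_nonneg. Qed.

Inductive step := Pull (k : nat) | Merge (k : nat) | Idle.

Definition graph (st : step) : nat -> nat -> bool :=
  match st with
  | Pull k => fun i j => (Nat.eqb i j || (Nat.eqb i k && Nat.eqb j (S k)) || (Nat.eqb i (S k) && Nat.eqb j k))%bool
  | Merge k => fun i j => (Nat.eqb i j || (Nat.eqb i k && Nat.ltb k j) || (Nat.eqb j k && Nat.ltb k i))%bool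
  | Idle => fun i j => Nat.eqb i j
  end.

Definition isMid (st : step) : bool := match st with Merge _ => true | _ => false end.

Definition Lc (n : nat) (gr : nat -> nat -> bool) (c : nat -> R) (i : nat) : R :=
  fold_right Rmin (c i) (map c (filter (gr i) (seq 0 n))).
Definition Rc (n : nat) (gr : nat -> nat -> bool) (c : nat -> R) (i : nat) : R :=
  fold_right Rmax (c i) (map c (filter (gr i) (seq 0 n))).

Definition rule (rho : R) (mid : bool) (L H v : R) : R :=
  if mid then (L + H) / 2 else Rmax (L + rho * (H - L)) (Rmin v (H - rho * (H - L))).

Definition apply (n : nat) (rho : R) (st : step) (c : nat -> R) : nat -> R :=
  fun i => if Nat.ltb i n then rule rho (isMid st) (Lc n (graph st) c i) (Rc n (graph st) c i) (c i) else c i.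

Lemma fmin_ge : forall l A init, A <= init -> (forall y, In y l -> A <= y) -> A <= fold_right Rmin init l.
Proof.
  induction l; intros A init H1 H2; simpl; [lra|].
  apply Rmin_glb; [apply H2; simpl; tauto| apply IHl; auto; intros; apply H2; simpl; tauto].
Qed.
Lemma fmin_init : forall l init, fold_right Rmin init l <= init.
Proof. induction l; intros; simpl; [lra|]. eapply Rle_trans; [apply Rmin_r| apply IHl]. Qed.
Lemma fmin_in : forall l init y, In y l -> fold_right Rmin init l <= y.
Proof.
  induction l; intros init y H; [destruct H|]. simpl. destruct H as [->|H]; [apply Rmin_l|].
  eapply Rle_trans; [apply Rmin_r| apply IHl; auto].
Qed.
Lemma fmax_le : forall l A init, init <= A -> (forall y, In y l -> y <= A) -> fold_right Rmax init l <= A.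
Proof.
  induction l; intros A init H1 H2; simpl; [lra|].
  apply Rmax_lub; [apply H2; simpl; tauto| apply IHl; auto; intros; apply H2; simpl; tauto].
Qed.
Lemma fmax_init : forall l init, init <= fold_right Rmax init l.
Proof. induction l; intros; simpl; [lra|]. eapply Rle_trans; [apply IHl| apply Rmax_r]. Qed.
Lemma fmax_in : forall l init y, In y l -> y <= fold_right Rmax init l.
Proof.
  induction l; intros init y H; [destruct H|]. simpl. destruct H as [->|H]; [apply Rmax_l|].
  eapply Rle_trans; [apply IHl; eauto| apply Rmax_r].
Qed.

Lemma in_nb : forall n (gr : nat -> nat -> bool) i (y : R) (c : nat -> R), In y (map c (filter (gr i) (seq 0 n))) <->
  exists j, (j < n)%nat /\ gr i j = true /\ y = c j.
Proof.
  intros. rewrite in_map_iff. split.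
  - intros [j [<- Hj]]. apply filter_In in Hj. destruct Hj as [Hj E]. apply in_seq in Hj.
    exists j; repeat split; auto; lia.
  - intros [j [Hj [E ->]]]. exists j; split; auto. apply filter_In; split; auto. apply in_seq; lia.
Qed.

Lemma LR_bounds : forall n gr c i, Lc n gr c i <= c i <= Rc n gr c i.
Proof. intros; split; [apply fmin_init| apply fmax_init]. Qed.

Lemma apply_valid : forall n rho st c i, 0 < rho <= 1/2 -> (i < n)%nat ->
  let L := Lc n (graph st) c i in let H := Rc n (graph st) c i in
  L + rho * (H - L) <= apply n rho st c i <= H - rho * (H - L).
Proof.
  intros n rho st c i Hr Hi L H. unfold apply. replace (Nat.ltb i n) with true by (symmetry; apply Nat.ltb_lt; lia).
  pose proof (LR_bounds n (graph st) c i) as HB. fold L H in HB. destruct HB as [HB1 HB2].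
  assert (HP : 0 <= (1/2 - rho) * (H - L)) by (apply Rmult_le_pos; lra).
  assert (HP2 : 0 <= rho * (H - L)) by (apply Rmult_le_pos; lra).
  unfold rule. fold L H. destruct (isMid st).
  - split; lra.
  - unfold Rmax, Rmin. destruct (Rle_dec (c i) (H - rho * (H - L)));
    destruct (Rle_dec (L + rho * (H - L)) _); lra.
Qed.

Lemma apply_range : forall n rho st c, 0 < rho <= 1/2 ->
  (forall i, (i < n)%nat -> 0 <= c i <= 1) -> forall i, (i < n)%nat -> 0 <= apply n rho st c i <= 1.
Proof.
  intros n rho st c Hr Hc i Hi.
  assert (HL : 0 <= Lc n (graph st) c i).
  { apply fmin_ge; [apply Hc; auto|]. intros y Hy. apply in_nb in Hy. destruct Hy as [j [Hj [_ ->]]]. apply Hc; auto. }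
  assert (HR : Rc n (graph st) c i <= 1).
  { apply fmax_le; [apply Hc; auto|]. intros y Hy. apply in_nb in Hy. destruct Hy as [j [Hj [_ ->]]]. apply Hc; auto. }
  pose proof (apply_valid n rho st c i Hr Hi) as HV. cbv zeta in HV.
  pose proof (LR_bounds n (graph st) c i) as HB.
  assert (HP2 : 0 <= rho * (Rc n (graph st) c i - Lc n (graph st) c i)) by (apply Rmult_le_pos; lra).
  lra.
Qed.

Lemma two_vals : forall n gr c i a b,
  (forall j, (j < n)%nat -> gr i j = true -> c j = a \/ c j = b) -> c i = a ->
  (exists j, (j < n)%nat /\ gr i j = true /\ c j = b) ->
  Lc n gr c i = Rmin a b /\ Rc n gr c i = Rmax a b.
Proof.
  intros n gr c i a b H Hi [j0 [Hj0 [E0 Hb]]].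
  assert (Hin : In b (map c (filter (gr i) (seq 0 n)))) by (apply in_nb; exists j0; auto).
  split; apply Rle_antisym.
  - apply Rmin_glb; [rewrite <- Hi; apply fmin_init| apply fmin_in; auto].
  - apply fmin_ge; [rewrite Hi; apply Rmin_l|]. intros y Hy. apply in_nb in Hy.
    destruct Hy as [j [Hj [E ->]]]. destruct (H j Hj E) as [->| ->]; [apply Rmin_l|apply Rmin_r].
  - apply fmax_le; [rewrite Hi; apply Rmax_l|]. intros y Hy. apply in_nb in Hy.
    destruct Hy as [j [Hj [E ->]]]. destruct (H j Hj E) as [->| ->]; [apply Rmax_l|apply Rmax_r].
  - apply Rmax_lub; [rewrite <- Hi; apply fmax_init| apply fmax_in; auto].
Qed.

Lemma apply_two : forall n rho st c i a b, 0 < rho <= 1/2 -> (i < n)%nat ->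
  (forall j, (j < n)%nat -> graph st i j = true -> c j = a \/ c j = b) -> c i = a ->
  (exists j, (j < n)%nat /\ graph st i j = true /\ c j = b) ->
  apply n rho st c i = if isMid st then (a + b) / 2 else a + rho * (b - a).
Proof.
  intros n rho st c i a b Hr Hi H1 H2 H3.
  destruct (two_vals n (graph st) c i a b H1 H2 H3) as [HL HR].
  unfold apply. replace (Nat.ltb i n) with true by (symmetry; apply Nat.ltb_lt; lia).
  unfold rule. rewrite HL, HR, H2. destruct (isMid st).
  - unfold Rmin, Rmax; destruct (Rle_dec a b); lra.
  - unfold Rmin, Rmax. destruct (Rle_dec a b).
    + destruct (Rle_dec a (b - rho * (b - a))); [|nra].
      destruct (Rle_dec (a + rho * (b - a)) a); nra.
    + destruct (Rle_dec a (a - rho * (a - b))); [nra|].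
      destruct (Rle_dec (b + rho * (a - b)) (a - rho * (a - b))); nra.
Qed.

Lemma apply_self : forall n rho st c i, 0 < rho <= 1/2 -> (i < n)%nat ->
  (forall j, (j < n)%nat -> graph st i j = true -> j = i) -> graph st i i = true ->
  apply n rho st c i = c i.
Proof.
  intros n rho st c i Hr Hi H1 H2. rewrite (apply_two n rho st c i (c i) (c i) Hr Hi).
  - destruct (isMid st); lra.
  - intros j Hj E. left. rewrite (H1 j Hj E). reflexivity.
  - reflexivity.
  - exists i; auto.
Qed.

Ltac gsolve := unfold graph; repeat rewrite Bool.orb_true_iff; repeat rewrite Bool.andb_true_iff;
  rewrite ?Nat.eqb_eq, ?Nat.ltb_lt; lia.

Lemma apply_pull : forall n rho k c, 0 < rho <= 1/2 -> (S k < n)%nat ->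
  apply n rho (Pull k) c = fun i =>
    if Nat.eqb i k then c k + rho * (c (S k) - c k)
    else if Nat.eqb i (S k) then c (S k) + rho * (c k - c (S k)) else c i.
Proof.
  intros n rho k c Hr Hk. apply functional_extensionality. intro i.
  destruct (Nat.ltb i n) eqn:Ein.
  2:{ apply Nat.ltb_ge in Ein. unfold apply. replace (Nat.ltb i n) with false by (symmetry; apply Nat.ltb_ge; lia).
      replace (Nat.eqb i k) with false by (symmetry; apply Nat.eqb_neq; lia).
      replace (Nat.eqb i (S k)) with false by (symmetry; apply Nat.eqb_neq; lia). reflexivity. }
  apply Nat.ltb_lt in Ein.
  destruct (Nat.eqb_spec i k) as [->|Hik].
  - rewrite (apply_two n rho (Pull k) c k (c k) (c (S k))); auto.
    + intros j Hj E. unfold graph in E. repeat rewrite Bool.orb_true_iff in E. repeat rewrite Bool.andb_true_iff in E.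
      repeat rewrite Nat.eqb_eq in E. destruct E as [[E|[E1 E2]]|[E1 E2]]; subst; auto; lia.
    + exists (S k). split; auto. split; [gsolve|reflexivity].
  - destruct (Nat.eqb_spec i (S k)) as [->|Hisk].
    + rewrite (apply_two n rho (Pull k) c (S k) (c (S k)) (c k)); auto.
      * intros j Hj E. unfold graph in E. repeat rewrite Bool.orb_true_iff in E. repeat rewrite Bool.andb_true_iff in E.
        repeat rewrite Nat.eqb_eq in E. destruct E as [[E|[E1 E2]]|[E1 E2]]; subst; auto; lia.
      * exists k. split; [lia|]. split; [gsolve|reflexivity].
    + apply apply_self; auto.
      * intros j Hj E. unfold graph in E. repeat rewrite Bool.orb_true_iff in E. repeat rewrite Bool.andb_true_iff in E.
        repeat rewrite Nat.eqb_eq in E. destruct E as [[E|[E1 E2]]|[E1 E2]]; subst; auto; lia.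
      * gsolve.
Qed.

Lemma apply_merge : forall n rho k c p, 0 < rho <= 1/2 -> (S k < n)%nat ->
  (forall j, (k < j < n)%nat -> c j = p) ->
  apply n rho (Merge k) c = fun i =>
    if (Nat.leb k i && Nat.ltb i n)%bool then (c k + p) / 2 else c i.
Proof.
  intros n rho k c p Hr Hk Hp. apply functional_extensionality. intro i.
  destruct (Nat.ltb i n) eqn:Ein.
  2:{ rewrite Bool.andb_false_r. unfold apply. rewrite Ein. reflexivity. }
  apply Nat.ltb_lt in Ein. rewrite Bool.andb_true_r.
  destruct (Nat.eqb_spec i k) as [->|Hik].
  - rewrite Nat.leb_refl.
    rewrite (apply_two n rho (Merge k) c k (c k) p); auto.
    + intros j Hj E. unfold graph in E. repeat rewrite Bool.orb_true_iff in E. repeat rewrite Bool.andb_true_iff in E.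
      rewrite !Nat.eqb_eq, !Nat.ltb_lt in E. destruct E as [[E|[E1 E2]]|[E1 E2]]; subst; first [left; reflexivity | right; reflexivity | left; apply Hp; lia | right; apply Hp; lia | lia].
    + exists (S k). split; auto. split; [gsolve| apply Hp; lia].
  - destruct (Nat.leb_spec k i) as [Hki|Hki].
    + rewrite (apply_two n rho (Merge k) c i p (c k)); auto.
      * simpl. lra.
      * intros j Hj E. unfold graph in E. repeat rewrite Bool.orb_true_iff in E. repeat rewrite Bool.andb_true_iff in E.
        rewrite !Nat.eqb_eq, !Nat.ltb_lt in E. destruct E as [[E|[E1 E2]]|[E1 E2]]; subst; first [left; reflexivity | right; reflexivity | left; apply Hp; lia | right; apply Hp; lia | lia].
      * apply Hp; lia.
      * exists k. split; [lia|]. split; [gsolve|reflexivity].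
    + apply apply_self; auto.
      * intros j Hj E. unfold graph in E. repeat rewrite Bool.orb_true_iff in E. repeat rewrite Bool.andb_true_iff in E.
        rewrite !Nat.eqb_eq, !Nat.ltb_lt in E. destruct E as [[E|[E1 E2]]|[E1 E2]]; subst; auto; lia.
      * gsolve.
Qed.

Definition w (n : nat) (s : R) (st : step) (c : nat -> R) : R :=
  match st with
  | Pull k | Merge k => if Nat.ltb (S k) n then pw (Rabs (c k - c (S k))) s else 0
  | Idle => 0
  end.

Fixpoint run (n : nat) (rho : R) (c : nat -> R) (l : list step) : nat -> R :=
  match l with [] => c | st :: l' => run n rho (apply n rho st c) l' end.
Fixpoint runE (n : nat) (rho s : R) (c : nat -> R) (l : list step) : R :=
  match l with [] => 0 | st :: l' => w n s st c + runE n rho s (apply n rho st c) l' end.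

Lemma run_app : forall n rho l1 l2 c, run n rho c (l1 ++ l2) = run n rho (run n rho c l1) l2.
Proof. induction l1; intros; simpl; auto. Qed.
Lemma w_nonneg : forall n s st c, 0 <= w n s st c.
Proof. intros. destruct st; simpl; try lra; destruct (Nat.ltb _ n); try lra; apply pw_nonneg. Qed.
Lemma runE_app : forall n rho s l1 l2 c,
  runE n rho s c (l1 ++ l2) = runE n rho s c l1 + runE n rho s (run n rho c l1) l2.
Proof. induction l1; intros; simpl; [lra|]. rewrite IHl1. lra. Qed.
Lemma runE_nonneg : forall n rho s l c, 0 <= runE n rho s c l.
Proof. induction l; intros; simpl; [lra|]. pose proof (w_nonneg n s a c). pose proof (IHl (apply n rho a c)). lra. Qed.

Fixpoint sched (K m k : nat) : list step :=
  match m with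
  | O => []
  | S m' => concat (repeat (Pull k :: sched K m' (S k)) K) ++ [Merge k]
  end.

Definition Ef (rho s : R) (K : nat) : R := INR K * Rpower ((1 - 2 * rho) ^ K) s * Rpower rho s.

Lemma Rpower_pos : forall a s, 0 < Rpower a s.
Proof. intros; unfold Rpower; apply exp_pos. Qed.

Lemma pw_scale : forall a mu s, 0 < a -> 0 <= mu -> pw (a * mu) s = Rpower a s * pw mu s.
Proof.
  intros a mu s Ha Hmu. unfold pw. destruct (Rle_dec mu 0).
  - assert (mu = 0) by lra. subst. rewrite Rmult_0_r. destruct (Rle_dec 0 0); [lra|lra].
  - destruct (Rle_dec (a * mu) 0). { assert (0 < a * mu) by (apply Rmult_lt_0_compat; lra). lra. }
    rewrite Rpower_mult_distr; auto; lra.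
Qed.

Lemma Rpower_le1 : forall a s, 0 < a <= 1 -> 0 <= s -> Rpower a s <= 1.
Proof.
  intros a s Ha Hs. unfold Rpower. rewrite <- exp_0. 
  destruct (Rle_lt_or_eq_dec 0 s Hs) as [Hs1|Hs1]; [|subst s; rewrite Rmult_0_l; lra].
  destruct (Rle_lt_or_eq_dec a 1 (proj2 Ha)) as [Ha1|Ha1]; [|subst a].
  - left. apply exp_increasing. assert (ln a < 0). { rewrite <- ln_1. apply ln_increasing; lra. } nra.
  - rewrite ln_1, Rmult_0_r. lra.
Qed.

Definition st_cfg (n : nat) (c : nat -> R) (k : nat) (q D sg gm : R) : nat -> R :=
  fun i => if Nat.eqb i k then q + sg * D
           else if (Nat.ltb k i && Nat.ltb i n)%bool then q + (sg + gm) * D else c i.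

Ltac cases := repeat match goal with
  | |- context [Nat.eqb ?a ?b] => destruct (Nat.eqb_spec a b)
  | |- context [Nat.ltb ?a ?b] => destruct (Nat.ltb_spec a b)
  | |- context [Nat.leb ?a ?b] => destruct (Nat.leb_spec a b)
  end; simpl.

Lemma pow_bounds : forall a j, 0 < a <= 1 -> 0 < a ^ j <= 1.
Proof.
  intros a j Ha. induction j; simpl; [lra|]. split; [apply Rmult_lt_0_compat; lra|].
  nra.
Qed.

Lemma G : forall n rho s K, 0 < rho <= 1/3 -> 0 < s ->
  forall m k c q p, (k + m = n - 1)%nat -> (1 <= n)%nat -> c k = q ->
  (forall j, (k < j < n)%nat -> c j = p) ->
  (exists lam, 0 <= lam <= 1 /\ run n rho c (sched K m k) =
     (fun i => if (Nat.leb k i && Nat.ltb i n)%bool then q + lam * (p - q) else c i))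
  /\ ((1 <= m)%nat -> (Ef rho s K) ^ m * pw (Rabs (p - q)) s <= runE n rho s c (sched K m k)).
Proof.
  intros n rho s K Hr Hs. induction m as [|m IH]; intros k c q p Hkm Hn Hq Hp.
  - split; [|intro; lia]. exists 0. split; [lra|]. simpl. apply functional_extensionality; intro i.
    cases; try reflexivity. replace i with k by lia. lra.
  - set (D := p - q). set (F := Rpower rho s * Ef rho s K ^ m).
    assert (HSk : (S k < n)%nat) by lia.
    assert (HE : 0 <= Ef rho s K).
    { unfold Ef. pose proof (pos_INR K). pose proof (Rpower_pos ((1 - 2 * rho) ^ K) s).
      pose proof (Rpower_pos rho s). apply Rmult_le_pos; [apply Rmult_le_pos|]; lra. }
    assert (HF : 0 <= F) by (unfold F; pose proof (Rpower_pos rho s); pose proof (pow_le _ m HE); nra).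
    assert (Hblock : forall sg gm, 0 <= sg -> 0 <= gm -> sg + gm <= 1 ->
      exists lam, 0 <= lam <= 1 /\
        run n rho (st_cfg n c k q D sg gm) (Pull k :: sched K m (S k)) =
          st_cfg n c k q D (sg + rho * gm) (gm * (1 - 2 * rho + lam * rho)) /\
        F * pw (gm * Rabs D) s <= runE n rho s (st_cfg n c k q D sg gm) (Pull k :: sched K m (S k))).
    { intros sg gm H1 H2 H3.
      set (c0 := st_cfg n c k q D sg gm).
      assert (Hc1 : apply n rho (Pull k) c0 = fun i => if Nat.eqb i k then q + (sg + rho * gm) * D
                 else if Nat.eqb i (S k) then q + (sg + gm - rho * gm) * D else c0 i).
      { rewrite apply_pull by (lra || lia). apply functional_extensionality; intro i.
        unfold c0, st_cfg. cases; try lia; ring. }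
      destruct (IH (S k) (apply n rho (Pull k) c0) (q + (sg + gm - rho * gm) * D) (q + (sg + gm) * D))
        as [[lam [Hl Hrun]] Hen]; try lia.
      { rewrite Hc1. cases; try lia; ring. }
      { intros j Hj. rewrite Hc1. unfold c0, st_cfg. cases; try lia; ring. }
      exists lam. split; [exact Hl|]. split.
      - simpl. rewrite Hrun. apply functional_extensionality; intro i. rewrite Hc1.
        unfold c0, st_cfg. cases; try lia; ring.
      - simpl. unfold w. replace (Nat.ltb (S k) n) with true by (symmetry; apply Nat.ltb_lt; lia).
        assert (Hw : pw (Rabs (c0 k - c0 (S k))) s = pw (gm * Rabs D) s).
        { f_equal. unfold c0, st_cfg. cases; try lia.
          replace (q + sg * D - (q + (sg + gm) * D)) with (- (gm * D)) by ring.
          rewrite Rabs_Ropp, Rabs_mult, (Rabs_pos_eq gm) by lra. reflexivity. }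
        rewrite Hw. pose proof (pw_nonneg (gm * Rabs D) s) as Hpw.
        destruct m as [|m'].
        + pose proof (runE_nonneg n rho s (sched K 0 (S k)) (apply n rho (Pull k) c0)).
          assert (F <= 1). { unfold F. simpl. rewrite Rmult_1_r. apply Rpower_le1; lra. }
          nra.
        + specialize (Hen ltac:(lia)).
          replace (q + (sg + gm) * D - (q + (sg + gm - rho * gm) * D)) with (rho * (gm * D)) in Hen by ring.
          rewrite Rabs_mult, (Rabs_pos_eq rho), Rabs_mult, (Rabs_pos_eq gm) in Hen by lra.
          assert (0 <= gm * Rabs D) by (pose proof (Rabs_pos D); nra).
          rewrite pw_scale in Hen by lra.
          unfold F. lra. }
    assert (Hrounds : forall j sg gm, 0 <= sg -> 0 <= gm -> sg + gm <= 1 ->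
      exists sg' gm', 0 <= sg' /\ 0 <= gm' /\ sg' + gm' <= 1 /\ (1 - 2 * rho) ^ j * gm <= gm' /\
        run n rho (st_cfg n c k q D sg gm) (concat (repeat (Pull k :: sched K m (S k)) j))
          = st_cfg n c k q D sg' gm' /\
        INR j * F * pw ((1 - 2 * rho) ^ j * gm * Rabs D) s
          <= runE n rho s (st_cfg n c k q D sg gm) (concat (repeat (Pull k :: sched K m (S k)) j))).
    { induction j as [|j IHj]; intros sg gm H1 H2 H3.
      - exists sg, gm. simpl. repeat split; try lra.
      - destruct (Hblock sg gm H1 H2 H3) as [lam [Hl [Hr1 He1]]].
        assert (Hfac : 1 - 2 * rho <= 1 - 2 * rho + lam * rho) by nra.
        assert (Hg1 : 0 <= gm * (1 - 2 * rho + lam * rho)) by (apply Rmult_le_pos; lra).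
        assert (Hq1 : 0 <= gm * (rho * (1 - lam))) by (apply Rmult_le_pos; [lra| apply Rmult_le_pos; lra]).
        destruct (IHj (sg + rho * gm) (gm * (1 - 2 * rho + lam * rho))) as [sg' [gm' [A1 [A2 [A3 [A4 [A5 A6]]]]]]].
        { assert (0 <= rho * gm) by (apply Rmult_le_pos; lra). lra. }
        { exact Hg1. }
        { nra. }
        exists sg', gm'.
        replace (concat (repeat (Pull k :: sched K m (S k)) (S j))) with
          ((Pull k :: sched K m (S k)) ++ concat (repeat (Pull k :: sched K m (S k)) j)) by reflexivity.
        rewrite run_app, runE_app, Hr1.
        pose proof (pow_bounds (1 - 2 * rho) j ltac:(lra)) as Hpj.
        split; [lra|]. split; [lra|]. split; [lra|]. split.
        + simpl. eapply Rle_trans; [|exact A4].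
          assert (0 <= (1 - 2 * rho) ^ j * gm * (lam * rho)) by
            (apply Rmult_le_pos; [apply Rmult_le_pos; lra| apply Rmult_le_pos; lra]).
          lra.
        + split; [exact A5|].
          assert (Hm1 : pw ((1 - 2 * rho) ^ S j * gm * Rabs D) s <= pw (gm * Rabs D) s).
          { apply pw_mono; auto. simpl. pose proof (Rabs_pos D).
            assert (0 <= gm * Rabs D) by (apply Rmult_le_pos; lra).
            assert ((1 - 2 * rho) * (1 - 2 * rho) ^ j <= 1) by nra. nra. }
          assert (Hm2 : pw ((1 - 2 * rho) ^ S j * gm * Rabs D) s
                        <= pw ((1 - 2 * rho) ^ j * (gm * (1 - 2 * rho + lam * rho)) * Rabs D) s).
          { apply pw_mono; auto. simpl. pose proof (Rabs_pos D).
            assert (0 <= gm * Rabs D) by (apply Rmult_le_pos; lra).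
            assert (0 <= (1 - 2 * rho) ^ j * gm * Rabs D) by (apply Rmult_le_pos; [apply Rmult_le_pos|]; lra).
            nra. }
          rewrite S_INR.
          assert (0 <= INR j) by apply pos_INR.
          assert (INR j * F * pw ((1 - 2 * rho) ^ S j * gm * Rabs D) s <=
                  INR j * F * pw ((1 - 2 * rho) ^ j * (gm * (1 - 2 * rho + lam * rho)) * Rabs D) s).
          { apply Rmult_le_compat_l; [apply Rmult_le_pos; lra| exact Hm2]. }
          assert (F * pw ((1 - 2 * rho) ^ S j * gm * Rabs D) s <= F * pw (gm * Rabs D) s)
            by (apply Rmult_le_compat_l; lra).
          lra. }
    assert (Hc0 : st_cfg n c k q D 0 1 = c).
    { apply functional_extensionality; intro i. unfold st_cfg, D. cases; subst; try reflexivity; try ring.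
      rewrite (Hp i) by lia. ring. }
    destruct (Hrounds K 0 1) as [sg [gm [B1 [B2 [B3 [B4 [B5 B6]]]]]]]; try lra.
    rewrite Hc0 in B5, B6.
    change (sched K (S m) k) with (concat (repeat (Pull k :: sched K m (S k)) K) ++ [Merge k]).
    split.
    + exists (sg + gm / 2). split; [lra|]. rewrite run_app, B5. simpl.
      rewrite (apply_merge n rho k (st_cfg n c k q D sg gm) (q + (sg + gm) * D)) by
        (try lra; try lia; intros j Hj; unfold st_cfg; cases; try lia; reflexivity).
      apply functional_extensionality; intro i. unfold st_cfg, D. cases; try lia; try ring; lra.
    + intros _. rewrite runE_app.
      pose proof (runE_nonneg n rho s [Merge k] (run n rho c (concat (repeat (Pull k :: sched K m (S k)) K)))).
      rewrite Rmult_1_r in B6.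
      pose proof (pow_bounds (1 - 2 * rho) K ltac:(lra)) as HpK.
      rewrite pw_scale in B6 by (try lra; apply Rabs_pos).
      fold D. replace (Ef rho s K ^ S m * pw (Rabs D) s) with
        (INR K * F * (Rpower ((1 - 2 * rho) ^ K) s * pw (Rabs D) s)) by (unfold F, Ef; simpl; ring).
      lra.
Qed.

Fixpoint tr (n : nat) (rho : R) (r : list step) (c : nat -> R) (t : nat) : nat -> R :=
  match t with
  | O => c
  | S t' => apply n rho (nth t' r Idle) (tr n rho r c t')
  end.

Lemma tr_cons : forall n rho st r c u, tr n rho (st :: r) c (S u) = tr n rho r (apply n rho st c) u.
Proof. intros n rho st r c u. induction u; simpl; auto. simpl in IHu. rewrite IHu. reflexivity. Qed.

Definition sumR (l : list R) : R := fold_right Rplus 0 l.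

Lemma runE_tr : forall n rho s r c,
  runE n rho s c r = sumR (map (fun u => w n s (nth u r Idle) (tr n rho r c u)) (seq 0 (length r))).
Proof.
  intros n rho s. induction r as [|st r IH]; intros c; [reflexivity|].
  simpl length. simpl seq. simpl map. unfold sumR. simpl fold_right. simpl runE. f_equal.
  rewrite IH. unfold sumR. f_equal. rewrite <- seq_shift, map_map. apply map_ext. intro u.
  rewrite tr_cons. reflexivity.
Qed.

Lemma sum_mono : forall (f g : nat -> R) l, (forall u, In u l -> f u <= g u) ->
  sumR (map f l) <= sumR (map g l).
Proof.
  intros f g l. induction l; intros H; unfold sumR; simpl; [lra|].
  pose proof (H a (or_introl eq_refl)). assert (sumR (map f l) <= sumR (map g l)) by (apply IHl; intros; apply H; simpl; auto).
  unfold sumR in H1. lra.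
Qed.

Lemma exp_le_mono : forall a b, a <= b -> exp a <= exp b.
Proof. intros a b H. destruct (Rle_lt_or_eq_dec a b H) as [H1| ->]; [left; apply exp_increasing; auto| lra]. Qed.

Lemma graph_refl : forall st i, graph st i i = true.
Proof. intros [k|k|] i; unfold graph; rewrite Nat.eqb_refl; reflexivity. Qed.

Lemma graph_sym : forall st i j, graph st i j = graph st j i.
Proof. intros [k|k|] i j; unfold graph; cases; try reflexivity; lia. Qed.

Lemma E_bound : forall rho s, 0 < rho <= 1/3 -> 0 < s <= 1 / log2 (1 / rho) ->
  let K := Z.to_nat (up (1 / (rho * s)) - 1) in
  (exp (-6) / 4) / (rho * s) <= Ef rho s K.
Proof.
  intros rho s Hr Hs K.
  assert (Hl2 : 0 < ln 2) by (rewrite <- ln_1; apply ln_increasing; lra).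
  assert (Hlr : ln rho <= - ln 2).
  { rewrite <- ln_Rinv by lra. destruct (Rle_lt_or_eq_dec rho (/2)) as [H|H]; [lra| |].
    - left; apply ln_increasing; lra.
    - rewrite H; lra. }
  assert (Hlog : log2 (1 / rho) = - ln rho / ln 2).
  { unfold log2. replace (1 / rho) with (/ rho) by (field; lra). rewrite ln_Rinv by lra. reflexivity. }
  assert (Hsl : s * (- ln rho) <= ln 2).
  { destruct Hs as [Hs1 Hs2]. rewrite Hlog in Hs2.
    replace (1 / (- ln rho / ln 2)) with (ln 2 / (- ln rho)) in Hs2 by (field; lra).
    apply (Rmult_le_compat_r (- ln rho)) in Hs2; [|lra].
    replace (ln 2 / - ln rho * - ln rho) with (ln 2) in Hs2 by (field; lra). lra. }
  assert (Hs1 : s <= 1).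
  { assert (s * ln 2 <= s * - ln rho) by (apply Rmult_le_compat_l; lra). nra. }
  set (X := 1 / (rho * s)).
  assert (Hrs : 0 < rho * s) by nra.
  assert (HX3 : 3 <= X).
  { unfold X. apply (Rmult_le_reg_r (rho * s)); auto. replace (1 / (rho * s) * (rho * s)) with 1 by (field; lra). nra. }
  assert (HK : INR K = IZR (up X) - 1).
  { unfold K. fold X. rewrite INR_IZR_INZ, Z2Nat.id.
    - rewrite minus_IZR. reflexivity.
    - destruct (archimed X) as [A1 A2]. assert (IZR (up X) > 1) by lra.
      assert (1 < up X)%Z by (apply lt_IZR; lra). lia. }
  destruct (archimed X) as [A1 A2].
  assert (HK1 : X / 2 <= INR K) by lra.
  assert (HK2 : INR K <= X) by lra.
  assert (HKpos : 0 <= INR K) by apply pos_INR.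
  assert (HP1 : Rpower rho s >= / 2).
  { unfold Rpower. replace (/2) with (exp (- ln 2)).
    - apply Rle_ge, exp_le_mono. nra.
    - rewrite exp_Ropp, exp_ln; lra. }
  assert (Hln : ln (1 - 2 * rho) >= - 6 * rho).
  { pose proof (exp_ineq1_le (- ln (1 - 2 * rho))).
    rewrite exp_Ropp, exp_ln in H by lra.
    assert (/ (1 - 2 * rho) <= 1 + 6 * rho).
    { apply (Rmult_le_reg_r (1 - 2 * rho)); [lra|]. rewrite Rinv_l by lra. nra. }
    lra. }
  assert (HP2 : Rpower ((1 - 2 * rho) ^ K) s >= exp (-6)).
  { unfold Rpower. rewrite ln_pow by lra. apply Rle_ge, exp_le_mono.
    assert (INR K * (rho * s) <= 1).
    { apply (Rle_trans _ (X * (rho * s))); [apply Rmult_le_compat_r; lra|].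
      unfold X. right. field. lra. }
    assert (s * (INR K * ln (1 - 2 * rho)) >= s * (INR K * (- 6 * rho))).
    { apply Rle_ge, Rmult_le_compat_l; [lra|]. apply Rmult_le_compat_l; lra. }
    nra. }
  unfold Ef. fold K.
  assert (He : 0 < exp (-6)) by apply exp_pos.
  replace (exp (-6) / 4 / (rho * s)) with ((X / 2) * exp (-6) * / 2) by (unfold X; field; lra).
  apply Rmult_le_compat; try lra.
  - apply Rmult_le_pos; lra.
  - apply Rmult_le_compat; lra.
Qed.

Theorem mainTheorem7 :
  exists c1 c2 : R, 0 < c1 /\ 0 < c2 /\
  forall (n : nat) (rho s : R),
    (2 <= n)%nat -> 0 < rho <= 1/3 -> 0 < s <= c1 / log2 (1 / rho) ->
    exists (g : nat -> nat -> nat -> bool) (x : nat -> nat -> R) (l : nat -> R),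
      averaging_system n rho g x /\
      (forall t, (1 <= t)%nat -> ell_value n g x s t (l t)) /\
      energy_ge l ((c2 / (rho * s)) ^ (n - 1)).
Proof.
  exists 1, (exp (-6) / 4). split; [lra|]. split; [pose proof (exp_pos (-6)); lra|].
  intros n rho s Hn Hr Hs.
  set (K := Z.to_nat (up (1 / (rho * s)) - 1)).
  set (steps := sched K (n - 1) 0).
  set (c0 := fun i : nat => if Nat.eqb i 0 then 0 else 1).
  set (g := fun t => graph (nth (t - 1) steps Idle)).
  set (x := fun t => tr n rho steps c0 (t - 1)).
  set (l := fun t => proj1_sig (constructive_indefinite_description _ (ell_ex n g x s t))).
  assert (Hl : forall t, ell_value n g x s t (l t)).
  { intro t. unfold l. exact (proj2_sig (constructive_indefinite_description _ (ell_ex n g x s t))). }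
  assert (Hr2 : 0 < rho <= 1/2) by lra.
  exists g, x, l. split; [|split].
  - split; [exact Hr2|]. split; [|split; [|split]].
    + intros t i _ _. apply graph_refl.
    + intros t i j _ _ _. apply graph_sym.
    + intros t i _ Hi. unfold x. generalize (t - 1)%nat. intro u. revert i Hi. induction u; intros i Hi.
      * simpl. unfold c0. destruct (Nat.eqb i 0); lra.
      * simpl. apply apply_range; auto.
    + intros t i Ht Hi. cbv zeta.
      replace (x (S t)) with (apply n rho (nth (t - 1) steps Idle) (x t)).
      2:{ unfold x. replace (S t - 1)%nat with (S (t - 1)) by lia. reflexivity. }
      exact (apply_valid n rho (nth (t - 1) steps Idle) (x t) i Hr2 Hi).
  - intros t _. apply Hl.
  - intros L HL. exists (length steps).
    assert (Hs' : 0 < s <= 1 / log2 (1 / rho)) by exact Hs.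
    pose proof (E_bound rho s Hr Hs') as HE. cbv zeta in HE. fold K in HE.
    destruct (G n rho s K Hr (proj1 Hs) (n - 1) 0 c0 0 1) as [_ Hen]; try lia.
    { reflexivity. }
    { intros j Hj. unfold c0. destruct (Nat.eqb_spec j 0); [lia|reflexivity]. }
    specialize (Hen ltac:(lia)). fold steps in Hen.
    replace (pw (Rabs (1 - 0)) s) with 1 in Hen.
    2:{ unfold pw. rewrite Rminus_0_r, Rabs_R1. destruct (Rle_dec 1 0); [lra|].
        unfold Rpower. rewrite ln_1, Rmult_0_r, exp_0. reflexivity. }
    rewrite Rmult_1_r in Hen.
    assert (Hc2 : 0 <= exp (-6) / 4 / (rho * s)).
    { pose proof (exp_pos (-6)). assert (0 < rho * s) by nra. apply Rlt_le, Rdiv_lt_0_compat; lra. }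
    pose proof (pow_incr _ _ (n - 1) (conj Hc2 HE)) as Hpow.
    rewrite runE_tr in Hen.
    assert (Hsum : sumR (map (fun u => w n s (nth u steps Idle) (tr n rho steps c0 u)) (seq 0 (length steps)))
                   <= sumR (map (fun u => l (S u)) (seq 0 (length steps)))).
    { apply sum_mono. intros u _.
      assert (Hx : x (S u) = tr n rho steps c0 u) by (unfold x; replace (S u - 1)%nat with u by lia; reflexivity).
      assert (Hg : g (S u) = graph (nth u steps Idle)) by (unfold g; replace (S u - 1)%nat with u by lia; reflexivity).
      rewrite <- Hx. destruct (nth u steps Idle) as [k|k|] eqn:E; simpl w;
        try (destruct (Nat.ltb_spec (S k) n));
        try (apply (ell_lb n g x s (S u) (l (S u)) k (S k)); [lra|apply Hl|lia|lia| rewrite Hg; gsolve]);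
        apply (ell_nonneg n g x s (S u)); apply Hl. }
    rewrite <- seq_shift, map_map. fold (sumR (map (fun u => l (S u)) (seq 0 (length steps)))).
    lra.
Qed.
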